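(* Let $m\ge1$ be an integer, let $\delta>1$ be the positive root of $x^2-(m+1)x-1$, and let $\boldsymbol{\beta}=(\beta_1,\beta_2)$ with $\beta_1=\frac{\delta}{\delta-1}$ and $\beta_2=\delta-1$. Then every rational number in $[0,1)$ has a purely periodic $\boldsymbol{\beta}$-expansion; in particular $\gamma(\boldsymbol{\beta})=1$.
   Context: An alternate base $(\beta_1,\dots,\beta_p)$ ($\beta_i>1$) is identified with the purely periodic sequence $(\beta_k)_{k\ge1}$, $\beta_{k+p}=\beta_k$. For $x\in[0,1)$ the $\boldsymbol{\beta}$-expansion $d_{\boldsymbol{\beta}}(x)=a_1a_2\cdots$ is given by the greedy algorithm $r_0=x$, $a_{k+1}=\lfloor\beta_{k+1}r_k\rfloor$, $r_{k+1}=\beta_{k+1}r_k-a_{k+1}$. The base has Property (PP) if there is $\gamma>0$ such that $d_{\boldsymbol{\beta}}(x)$ is purely periodic for all rational $x\in[0,\gamma)$; $\gamma(\boldsymbol{\beta})$ denotes the supremum of all such $\gamma$ (with $\gamma\le1$). *)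

(* Defs.v *)
From Stdlib Require Import Reals Lra ZArith.
Open Scope R_scope.

(* An alternate base is a purely periodic sequence beta : nat -> R, used at
   indices k >= 1 (beta 1, beta 2, ...). The base (b1, b2) of period 2: *)
Definition alt_base2 (b1 b2 : R) : nat -> R :=
  fun k => if Nat.odd k then b1 else b2.

Fixpoint beta_rem (beta : nat -> R) (x : R) (k : nat) : R :=
  match k with
  | O => x
  | S j => beta (S j) * beta_rem beta x j
           - IZR (Int_part (beta (S j) * beta_rem beta x j))
  end.

Definition beta_digit (beta : nat -> R) (x : R) (k : nat) : Z :=
  Int_part (beta k * beta_rem beta x (Nat.pred k)).

Definition purely_periodic_expansion (beta : nat -> R) (x : R) : Prop :=
  exists n : nat, (n >= 1)%nat /\
    forall k : nat, (k >= 1)%nat -> beta_digit beta x (k + n) = beta_digit beta x k.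

Definition is_rational (x : R) : Prop :=
  exists p q : Z, (q > 0)%Z /\ x = IZR p / IZR q.

Definition PP_set (beta : nat -> R) (g : R) : Prop :=
  0 < g <= 1 /\
  forall x, is_rational x -> 0 <= x < g -> purely_periodic_expansion beta x.

Definition gamma_is (beta : nat -> R) (c : R) : Prop :=
  is_lub (PP_set beta) c.

(* Main.v *)
Require Import Defs.
From Stdlib Require Import Reals Lra Lia Psatz ZArith Classical.
Open Scope R_scope.

Definition dd (m:nat) (de:R) := INR m + 1 - de.
Definition Bc m de := (2 - dd m de)/(1 - dd m de).
Definition zq (de:R) (q U V : Z) := (IZR U + IZR V * de) / IZR q.
Definition yq m de (q U V : Z) := (IZR U + IZR V * dd m de)/IZR q.
Definition dga de q U V := Int_part (de/(de-1) * zq de q U V).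
Definition dgb de q U V :=
  Int_part ((de-1) * (de/(de-1) * zq de q U V - IZR (dga de q U V))).
Definition G m de q (P : Z*Z) : Z*Z :=
  let (U,V) := P in
  let a := dga de q U V in let b := dgb de q U V in
  (V + q*(a-b), U + (Z.of_nat m+1)*V - q*a)%Z.
Definition Inv m de q (P : Z*Z) : Prop :=
  let (U,V) := P in
  let z := zq de q U V in let y := yq m de q U V in
  let B := Bc m de in let d := dd m de in
  0 <= z < 1 /\ B - de - 1 < y < B /\ (-d <= z -> B - de < y).

Lemma basics m de : (m >= 1)%nat -> de > 1 -> de ^ 2 - (INR m + 1) * de - 1 = 0 ->
  de > INR m + 1 /\ INR m >= 1 /\ dd m de < 0 /\ dd m de * de = -1 /\
  dd m de > -1/2 /\ (dd m de)^2 = (INR m + 1) * dd m de + 1 /\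
  Bc m de * (1 - dd m de) = 2 - dd m de /\ 1 < Bc m de < 2.
Proof.
  intros Hm Hd E.
  assert (Hm1 : INR m >= 1) by (apply Rle_ge; replace 1 with (INR 1) by reflexivity; apply le_INR; lia).
  assert (H1 : de > INR m + 1) by nra.
  unfold dd.
  assert (Hdd : (INR m + 1 - de) * de = -1) by nra.
  assert (Hneg : INR m + 1 - de < 0) by lra.
  assert (Hh : INR m + 1 - de > -1/2) by nra.
  split; [lra|]. split; [lra|]. split; [lra|]. split; [lra|]. split; [lra|].
  split; [nra|].
  unfold Bc, dd. split. field. lra.
  split; apply Rmult_lt_reg_r with (1 - (INR m + 1 - de)); try lra;
  unfold Rdiv; rewrite Rmult_assoc, Rinv_l; lra.
Qed.

Lemma zq_step m de q U V : (q > 0)%Z -> de > 1 -> de ^ 2 - (INR m + 1) * de - 1 = 0 ->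
  let P := G m de q (U,V) in
  zq de q (fst P) (snd P) = de * zq de q U V - IZR (dga de q U V) * (de - 1) - IZR (dgb de q U V).
Proof.
  intros Hq Hd E P. unfold P, G. simpl.
  set (a := dga de q U V). set (b := dgb de q U V). clearbody a b.
  assert (Hq' : IZR q <> 0) by (apply not_0_IZR; lia).
  unfold zq. repeat (rewrite ?plus_IZR, ?minus_IZR, ?mult_IZR); try rewrite <- INR_IZR_INZ.
  match goal with |- ?L = ?R => assert (L - R = - (IZR V / IZR q) * (de ^ 2 - (INR m + 1) * de - 1)) by (field; auto) end.
  rewrite E in H. lra.
Qed.

Lemma yq_step m de q U V : (q > 0)%Z -> de > 1 -> de ^ 2 - (INR m + 1) * de - 1 = 0 ->
  let P := G m de q (U,V) in
  yq m de q (fst P) (snd P) = dd m de * yq m de q U V - IZR (dga de q U V) * (dd m de - 1) - IZR (dgb de q U V).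
Proof.
  intros Hq Hd E P. unfold P, G. simpl.
  set (a := dga de q U V). set (b := dgb de q U V). clearbody a b.
  assert (Hq' : IZR q <> 0) by (apply not_0_IZR; lia).
  unfold yq. repeat (rewrite ?plus_IZR, ?minus_IZR, ?mult_IZR); try rewrite <- INR_IZR_INZ.
  match goal with |- ?L = ?R => assert (L - R = - (IZR V / IZR q) * (de ^ 2 - (INR m + 1) * de - 1)) by (unfold dd; field; auto) end.
  rewrite E in H. lra.
Qed.

Lemma Zle_of k n : IZR k < IZR n + 1 -> (k <= n)%Z.
Proof. intro H. rewrite <- plus_IZR in H. apply lt_IZR in H. lia. Qed.
Lemma Zge_of k n : IZR n - 1 < IZR k -> (n <= k)%Z.
Proof. intro H. rewrite <- minus_IZR in H. apply lt_IZR in H. lia. Qed.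

Lemma step m de q U V : (m >= 1)%nat -> (q > 0)%Z -> de > 1 ->
  de ^ 2 - (INR m + 1) * de - 1 = 0 -> Inv m de q (U,V) ->
  let P := G m de q (U,V) in
  let a := dga de q U V in let b := dgb de q U V in
  let w := yq m de q (fst P) (snd P) - dd m de * Bc m de in
  Inv m de q P /\
  ((a = 0%Z /\ b = 0%Z /\ 0 < w < 1 - dd m de) \/
   (a = 0%Z /\ (1 <= b)%Z /\ - IZR b < w < - IZR b + 1) \/
   (a = 1%Z /\ b = 0%Z /\ 1 - dd m de < w < 2 - dd m de)).
Proof.
  intros Hm Hq Hd E HI P a b w.
  destruct (basics m de Hm Hd E) as (H1 & Hm1 & Hdn & Hdde & Hdh & Hd2 & HB & HB12).
  pose proof (zq_step m de q U V Hq Hd E) as Zs.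
  pose proof (yq_step m de q U V Hq Hd E) as Ys.
  fold P in Zs, Ys. fold a b in Zs, Ys. unfold w. fold P.
  unfold Inv in HI |- *. destruct P as [U' V'] eqn:EP. simpl in Zs, Ys |- *.
  rewrite Zs, Ys. clear Zs Ys.
  set (z := zq de q U V) in *. set (y := yq m de q U V) in *.
  set (d := dd m de) in *. set (B := Bc m de) in *.
  assert (Ed : d = INR m + 1 - de) by reflexivity.
  set (r0 := de / (de - 1) * z).
  assert (Ha : a = Int_part r0) by reflexivity.
  assert (Hb : b = Int_part ((de - 1) * (r0 - IZR a))) by reflexivity.
  clearbody a b. clear EP. clearbody z y d B.
  destruct HI as [[Hz0 Hz1] [[Hy0 Hy1] Hy2]].
  assert (Hr0 : (de - 1) * r0 = de * z) by (unfold r0; field; lra).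
  clearbody r0.
  destruct (base_Int_part r0) as [Ia1 Ia2]. rewrite <- Ha in Ia1, Ia2.
  destruct (base_Int_part ((de - 1) * (r0 - IZR a))) as [Ib1 Ib2]. rewrite <- Hb in Ib1, Ib2.
  clear Ha Hb.
  assert (HINR : INR m + 1 = IZR (Z.of_nat m) + 1) by (rewrite <- INR_IZR_INZ; reflexivity).
  destruct (Rlt_le_dec r0 1) as [Hr | Hr].
  -
    assert (a = 0)%Z.
    { assert (a <= 0)%Z by (apply Zle_of; simpl; lra).
      assert (0 <= a)%Z by (apply Zge_of; simpl; nra). lia. }
    subst a. simpl in *.
    replace ((de - 1) * (r0 - 0)) with (de * z) in * by lra.
    assert (Hb0 : (0 <= b)%Z) by (apply Zge_of; simpl; nra).
    assert (Hbm : (b <= Z.of_nat m)%Z) by (apply Zle_of; nra).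
    assert (Hzb : de * z < de - 1) by nra.
    destruct (Z.eq_dec b 0) as [Eb | Eb].
    + subst b. simpl in *.
      split.
      * split; [lra|]. split; [split; nra|]. intros _. nra.
      * left. split; [reflexivity|]. split; [reflexivity|]. split; nra.
    + assert (Hb1 : (1 <= b)%Z) by lia.
      assert (Hb1' : 1 <= IZR b) by (apply IZR_le; lia).
      assert (Hzd : - d <= z) by nra.
      specialize (Hy2 Hzd).
      split.
      * split; [lra|]. split.
        -- assert (IZR b <= INR m) by (rewrite INR_IZR_INZ; apply IZR_le; lia).
           split; nra.
        -- intro Hz'. destruct (Z.eq_dec b (Z.of_nat m)) as [Ebm|Ebm].
           ++ subst b. rewrite <- INR_IZR_INZ in *. nra.
           ++ assert (IZR b <= INR m - 1).
              { rewrite INR_IZR_INZ, <- minus_IZR. apply IZR_le. lia. }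
              nra.
      * right; left. split; [reflexivity|]. split; [exact Hb1|]. split; nra.
  -
    assert (Hde2 : de > 2) by lra.
    assert (Hr2 : r0 < 2).
    { assert ((de - 1) * r0 < (de - 1) * 2) by nra. nra. }
    assert (a = 1)%Z.
    { assert (a <= 1)%Z by (apply Zle_of; simpl; lra).
      assert (1 <= a)%Z by (apply Zge_of; simpl; nra). lia. }
    subst a. simpl in *.
    replace ((de - 1) * (r0 - 1)) with (de * z - de + 1) in * by lra.
    assert (b = 0)%Z.
    { assert (b <= 0)%Z by (apply Zle_of; simpl; nra).
      assert (0 <= b)%Z by (apply Zge_of; simpl; nra). lia. }
    subst b. simpl in *.
    assert (Hzd : - d <= z) by nra.
    specialize (Hy2 Hzd).
    split.
    + split; [lra|]. split; [split; nra|]. intros _. nra.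
    + right; right. split; [reflexivity|]. split; [reflexivity|]. split; nra.
Qed.

Lemma Ginj m de q P1 P2 : (m >= 1)%nat -> (q > 0)%Z -> de > 1 ->
  de ^ 2 - (INR m + 1) * de - 1 = 0 -> Inv m de q P1 -> Inv m de q P2 ->
  G m de q P1 = G m de q P2 -> P1 = P2.
Proof.
  intros Hm Hq Hd E I1 I2 Heq.
  destruct (basics m de Hm Hd E) as (_ & _ & Hdn & _).
  destruct P1 as [U1 V1], P2 as [U2 V2].
  destruct (step m de q U1 V1 Hm Hq Hd E I1) as [_ S1].
  destruct (step m de q U2 V2 Hm Hq Hd E I2) as [_ S2].
  rewrite Heq in S1.
  set (w := yq m de q (fst (G m de q (U2, V2))) (snd (G m de q (U2, V2))) - dd m de * Bc m de) in *.
  clearbody w.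
  assert (Hdig : dga de q U1 V1 = dga de q U2 V2 /\ dgb de q U1 V1 = dgb de q U2 V2).
  { destruct S1 as [(A1&B1&W1)|[(A1&B1&W1)|(A1&B1&W1)]];
    destruct S2 as [(A2&B2&W2)|[(A2&B2&W2)|(A2&B2&W2)]];
    rewrite ?A1, ?A2, ?B1, ?B2; try (split; reflexivity); try (exfalso; lra);
    try (assert (1 <= IZR (dgb de q U1 V1)) by (apply IZR_le; lia); exfalso; lra);
    try (assert (1 <= IZR (dgb de q U2 V2)) by (apply IZR_le; lia); exfalso; lra).
    all: try (split; [reflexivity|];
    assert (dgb de q U1 V1 <= dgb de q U2 V2)%Z by (apply Zle_of; lra);
    assert (dgb de q U2 V2 <= dgb de q U1 V1)%Z by (apply Zle_of; lra); lia).
    }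
  destruct Hdig as [Ha Hb].
  unfold G in Heq. rewrite Ha, Hb in Heq. injection Heq. intros. f_equal; lia.
Qed.

Lemma Zbound m de q : (m >= 1)%nat -> (q > 0)%Z -> de > 1 ->
  de ^ 2 - (INR m + 1) * de - 1 = 0 ->
  exists M : Z, forall U V, Inv m de q (U,V) -> (- M < U < M /\ - M < V < M)%Z.
Proof.
  intros Hm Hq Hd E.
  destruct (basics m de Hm Hd E) as (H1 & Hm1 & Hdn & Hdde & Hdh & Hd2 & HB & HB12).
  set (qr := IZR q). assert (Hqr : qr > 0) by (apply IZR_lt; lia).
  set (K := qr * (de + 2)).
  set (C := qr + K * de + K).
  exists (up C). intros U V HI.
  destruct (archimed C) as [Hup _].
  unfold Inv, zq, yq in HI. fold qr in HI.
  set (d := dd m de) in *. set (B := Bc m de) in *. clearbody d B.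
  destruct HI as [[Hz0 Hz1] [[Hy0 Hy1] _]].
  set (s := IZR U + IZR V * de) in *. set (t := IZR U + IZR V * d) in *.
  assert (Hs0 : 0 <= s) by (apply Rmult_le_reg_r with (/qr); [apply Rinv_0_lt_compat; lra| lra]).
  assert (Hs1 : s < qr).
  { apply Rmult_lt_reg_r with (/qr); [apply Rinv_0_lt_compat; lra|]. rewrite Rinv_r; lra. }
  assert (Ht0 : (B - de - 1) * qr < t).
  { apply Rmult_lt_reg_r with (/qr); [apply Rinv_0_lt_compat; lra|]. rewrite Rmult_assoc, Rinv_r; lra. }
  assert (Ht1 : t < B * qr).
  { apply Rmult_lt_reg_r with (/qr); [apply Rinv_0_lt_compat; lra|]. rewrite Rmult_assoc, Rinv_r; lra. }
  assert (HV : IZR V * (de - d) = s - t) by (unfold s, t; ring).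
  assert (Hst : - K < s - t < K) by (unfold K; nra).
  assert (HVb : - K < IZR V < K).
  { assert (de - d >= 1) by lra. destruct (Rle_dec 0 (IZR V)); split; nra. }
  assert (HUb : - C < IZR U < C).
  { assert (IZR U = s - IZR V * de) by (unfold s; ring).
    assert (0 < K) by (unfold K; nra).
    unfold C; split; nra. }
  assert (0 < K) by (unfold K; nra).
  assert (HVc : - C < IZR V < C) by (unfold C; split; nra).
  split; split; [apply lt_IZR; rewrite opp_IZR; lra | apply lt_IZR; lra
                | apply lt_IZR; rewrite opp_IZR; lra | apply lt_IZR; lra].
Qed.

Lemma pigeon : forall N (f : nat -> nat), (forall i, (f i < N)%nat) ->
  exists i j, (i < j)%nat /\ f i = f j.
Proof.
  induction N as [|N IH]; intros f Hf.
  - specialize (Hf 0%nat). lia.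
  - destruct (classic (exists i, f i = N)) as [[i Hi]|Hn].
    + destruct (classic (exists j, (i < j)%nat /\ f j = N)) as [[j [Hj1 Hj2]]|Hn2].
      * exists i, j. split; [lia|congruence].
      * destruct (IH (fun k => f (k + S i)%nat)) as [a [b [Hab Eab]]].
        { intro k. specialize (Hf (k + S i)%nat).
          assert (f (k + S i)%nat <> N) by (intro; apply Hn2; exists (k + S i)%nat; split; [lia|auto]).
          lia. }
        exists (a + S i)%nat, (b + S i)%nat. split; [lia|exact Eab].
    + apply IH. intro i. specialize (Hf i).
      assert (f i <> N) by (intro; apply Hn; exists i; auto). lia.
Qed.

Lemma pigeonZ (M : Z) (P : nat -> Z*Z) :
  (forall k, (- M < fst (P k) < M /\ - M < snd (P k) < M)%Z) ->
  exists i j, (i < j)%nat /\ P i = P j.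
Proof.
  intros HB.
  assert (HM : (0 < M)%Z) by (destruct (HB 0%nat) as [[? ?] _]; lia).
  set (f := fun k => Z.to_nat ((fst (P k) + M) * (2 * M) + (snd (P k) + M))).
  destruct (pigeon (Z.to_nat (4 * M * M)) f) as [i [j [Hij Eij]]].
  { intro i. unfold f. destruct (HB i) as [[? ?] [? ?]].
    assert ((fst (P i) + M) * (2 * M) + (snd (P i) + M) < 4 * M * M)%Z by nia.
    lia. }
  exists i, j. split; [exact Hij|].
  unfold f in Eij. destruct (HB i) as [[? ?] [? ?]]. destruct (HB j) as [[? ?] [? ?]].
  destruct (P i) as [a b], (P j) as [c e]; simpl in *.
  assert (E : ((a + M) * (2 * M) + (b + M) = (c + M) * (2 * M) + (e + M))%Z).
  { apply Z2Nat.inj; try nia. exact Eij. }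
  assert (a = c) by nia. subst. f_equal. lia.
Qed.

Lemma rem_period (beta : nat -> R) x N :
  (forall k, beta (k + N)%nat = beta k) -> beta_rem beta x N = x ->
  forall k, beta_rem beta x (k + N) = beta_rem beta x k.
Proof.
  intros Hb Hx. induction k as [|k IH].
  - simpl. exact Hx.
  - change (S k + N)%nat with (S (k + N)). simpl. rewrite IH.
    change (S (k + N)) with (S k + N)%nat. rewrite Hb. reflexivity.
Qed.

Lemma alt_period b1 b2 n k : alt_base2 b1 b2 (k + 2 * n)%nat = alt_base2 b1 b2 k.
Proof. unfold alt_base2. rewrite Nat.odd_add_mul_2. reflexivity. Qed.

Lemma periodic_of (b1 b2 : R) x n : (n >= 1)%nat ->
  beta_rem (alt_base2 b1 b2) x (2 * n) = x ->
  purely_periodic_expansion (alt_base2 b1 b2) x.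
Proof.
  intros Hn Hx. exists (2 * n)%nat. split; [lia|].
  intros k Hk. unfold beta_digit.
  replace (Nat.pred (k + 2 * n)) with (Nat.pred k + 2 * n)%nat by lia.
  rewrite alt_period, (rem_period _ _ _ (alt_period b1 b2 n) Hx). reflexivity.
Qed.

Lemma link m de q p : (q > 0)%Z -> de > 1 -> de ^ 2 - (INR m + 1) * de - 1 = 0 ->
  forall k, beta_rem (alt_base2 (de / (de - 1)) (de - 1)) (zq de q p 0) (2 * k) =
    let P := Nat.iter k (G m de q) (p, 0%Z) in zq de q (fst P) (snd P).
Proof.
  intros Hq Hd E. induction k as [|k IH].
  - reflexivity.
  - replace (2 * S k)%nat with (S (S (2 * k))) by lia.
    cbn zeta. simpl Nat.iter.
    cbn zeta in IH. destruct (Nat.iter k (G m de q) (p, 0%Z)) as [U V] eqn:EP.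
    simpl fst in IH. simpl snd in IH.
    pose proof (zq_step m de q U V Hq Hd E) as Zs. cbn zeta in Zs. rewrite Zs.
    cbn [beta_rem].
    assert (O1 : alt_base2 (de / (de - 1)) (de - 1) (S (2 * k)) = de / (de - 1)).
    { unfold alt_base2. replace (S (2 * k)) with (1 + 2 * k)%nat by lia.
      rewrite Nat.odd_add_mul_2. reflexivity. }
    assert (O2 : alt_base2 (de / (de - 1)) (de - 1) (S (S (2 * k))) = de - 1).
    { unfold alt_base2. replace (S (S (2 * k))) with (2 + 2 * k)%nat by lia.
      rewrite Nat.odd_add_mul_2. reflexivity. }
    rewrite O1, O2, IH.
    unfold dgb, dga.
    set (a := Int_part (de / (de - 1) * zq de q U V)).
    set (b := Int_part ((de - 1) * (de / (de - 1) * zq de q U V - IZR a))).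
    field. lra.
Qed.

Theorem mainTheorem10 (m : nat) (delta : R) :
  (m >= 1)%nat ->
  delta > 1 ->
  delta ^ 2 - (INR m + 1) * delta - 1 = 0 ->
  let beta := alt_base2 (delta / (delta - 1)) (delta - 1) in
  (forall x : R, is_rational x -> 0 <= x < 1 -> purely_periodic_expansion beta x)
  /\ gamma_is beta 1.
Proof.
  intros Hm Hd E beta.
  assert (Main : forall x : R, is_rational x -> 0 <= x < 1 -> purely_periodic_expansion beta x).
  { intros x [p [q [Hq Hx]]] Hx01.
    destruct (basics m delta Hm Hd E) as (H1 & Hm1 & Hdn & Hdde & Hdh & Hd2 & HB & HB12).
    assert (Hxz : x = zq delta q p 0).
    { unfold zq. rewrite Hx, Rmult_0_l, Rplus_0_r. reflexivity. }
    set (P := fun k => Nat.iter k (G m delta q) (p, 0%Z)).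
    assert (HI : forall k, Inv m delta q (P k)).
    { induction k as [|k IH].
      - unfold P; simpl. unfold Inv. rewrite <- Hxz.
        assert (yq m delta q p 0 = x) by (rewrite Hxz; unfold yq, zq; simpl; field; apply not_0_IZR; lia).
        rewrite H. split; [lra|]. split; [split; lra|]. intros _. lra.
      - unfold P; simpl. fold (P k). destruct (P k) as [U V] eqn:EPk.
        exact (proj1 (step m delta q U V Hm Hq Hd E IH)). }
    destruct (Zbound m delta q Hm Hq Hd E) as [M HM].
    destruct (pigeonZ M P) as [i [j [Hij Eij]]].
    { intro k. specialize (HI k). destruct (P k) as [U V]. simpl. auto. }
    assert (Hback : forall i n, P i = P (i + n)%nat -> P 0%nat = P n).
    { induction i0 as [|i0 IH]; intros n Hn.
      - exact Hn.
      - apply IH. apply (Ginj m delta q _ _ Hm Hq Hd E (HI i0) (HI (i0 + n)%nat)).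
        exact Hn. }
    assert (Hper : P 0%nat = P (j - i)%nat).
    { apply (Hback i). replace (i + (j - i))%nat with j by lia. exact Eij. }
    apply (periodic_of _ _ _ (j - i)); [lia|].
    rewrite Hxz. rewrite (link m delta q p Hq Hd E (j - i)). cbn zeta.
    fold (P (j - i)%nat). rewrite <- Hper. reflexivity. }
  split; [exact Main|].
  split.
  - intros g [[_ Hg] _]. exact Hg.
  - intros b Hb. apply Hb. split; [lra|]. exact Main.
Qed.
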